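(* $\mathrm{L\text{-}ESO}_{d[0,1]}[=,\mathrm{SUM}]\equiv_{\mathbb R}\mathrm{L\text{-}ESO}_{d[0,1]}[=,\mathrm{SUM},0,1]$. The same equivalence holds when both logics are restricted to almost conjunctive $\ddot\exists^*\forall^*$-formulae.
   Context: Conventions on structures and $\mathrm{ESO}_{\mathbb R}$. Let $\tau$ be a finite relational vocabulary and $\sigma$ a finite functional vocabulary. An $\mathbb R$-structure of vocabulary $\tau\cup\sigma$ is a tuple $\mathfrak A=(A,\mathbb R,(R^{\mathfrak A})_{R\in\tau},(g^{\mathfrak A})_{g\in\sigma})$ where $A$ is a finite set with at least two elements, each $R^{\mathfrak A}\subseteq A^{\mathrm{ar}(R)}$ and each $g^{\mathfrak A}\colon A^{\mathrm{ar}(g)}\to\mathbb R$. For $S\subseteq\mathbb R$, $\mathfrak A$ is an $S$-structure if every $g^{\mathfrak A}$ takes values in $S$, and a $d[0,1]$-structure if every $g^{\mathfrak A}$ is a probability distribution on $A^{\mathrm{ar}(g)}$. If $\sigma=\emptyset$, $\mathfrak A$ is a finite structure. Numerical terms are built by $i::=c\mid f(\vec x)\mid i+i\mid i\times i\mid \mathrm{SUM}_{\vec y}\,i$, where $c\in\mathbb R$ is a constant, $f$ is a function symbol or function variable, and $\vec x,\vec y$ are tuples of first-order variables; under an assignment $s$, $f(\vec x)$ denotes $f^{\mathfrak A}(s(\vec x))$, $+,\times$ are real addition and multiplication, and $\mathrm{SUM}_{\vec y}\,i$ denotes $\sum_{\vec a\in A^{|\vec y|}}[i]_{s[\vec a/\vec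 y]}$ (the variables $\vec y$ become bound). For $O\subseteq\{+,\times,\mathrm{SUM}\}$, $E\subseteq\{=,<,\le\}$, $C\subseteq\mathbb R$, the formulae of $\mathrm{ESO}_{\mathbb R}[O,E,C]$ are given by $\phi::= x=y\mid\neg x=y\mid i\,e\,j\mid\neg\, i\,e\,j\mid R(\vec x)\mid\neg R(\vec x)\mid\phi\wedge\phi\mid\phi\vee\phi\mid\exists x\phi\mid\forall x\phi\mid\exists f\phi$, where $i,j$ are numerical terms using only operations in $O$ and constants in $C$, $e\in E$, $R\in\tau$, and $f$ is a function variable. Semantics is Tarskian: first-order variables range over $A$ and $\exists f$ ranges over all functions $A^{\mathrm{ar}(f)}\to\mathbb R$. For $S\subseteq\mathbb R$, $\mathrm{ESO}_S[O,E,C]$ has the same syntax but $\exists f$ ranges over functions $A^{\mathrm{ar}(f)}\to S$; in $\mathrm{ESO}_{d[0,1]}[O,E,C]$, $\exists f$ ranges over probability distributions on $A^{\mathrm{ar}(f)}$. Free function variables are interpreted like symbols of $\sigma$. We list the elements of $O,E,C$ together in brackets, e.g. $\mathrm{ESO}_{\mathbb R}[\le,+,\mathrm{SUM},0,1]$ means $O=\{+,\mathrm{SUM}\}$, $E=\{\le\}$, $C=\{0,1\}$. Fragments. The loose fragment $\mathrm{L\text{-}ESO}_S[O,E,C]$ of $\mathrm{ESO}_S[O,E,C]$ ($S$ a set of reals or $d[0,1]$) consists of the formulae containing no negated numerical atom $\neg\, i\,e\,j$. A formula is almost conjunctive if for every subformula $(\psi_1\vee\psi_2)$, at least one of $\psi_1,\psi_2$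 contains no numerical term. For a regular expression $L$ over $\{\ddot\exists,\exists,\forall\}$, the $L$-formulae of a logic are those in prenex form whose quantifier prefix belongs to $L$, where $\ddot\exists$ stands for an existential function quantifier and $\exists,\forall$ for first-order quantifiers (e.g. $\ddot\exists^*\forall^*$). Expressivity. For a formula $\phi$ and $X\subseteq\mathbb R$ or $X=d[0,1]$, $\mathrm{Struc}_X(\phi)$ is the class of pairs $(\mathfrak A,s)$ with $\mathfrak A$ an $X$-structure and $s$ an assignment of the free first-order variables such that $\mathfrak A\models_s\phi$. For logics $\mathcal L,\mathcal L'$, $\mathcal L\le_X\mathcal L'$ means every $\phi\in\mathcal L$ has some $\psi\in\mathcal L'$ with $\mathrm{Struc}_X(\phi)=\mathrm{Struc}_X(\psi)$; $\equiv_X$ means $\le_X$ in both directions. *)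

(* Defs.v *)
From Stdlib Require Import Reals.
From HB Require Import structures.
From mathcomp Require Import all_boot all_order all_algebra.
From mathcomp Require Import Rstruct.
Set Implicit Arguments. Unset Strict Implicit. Unset Printing Implicit Defensive.
Import Order.TTheory GRing.Theory Num.Theory.
Local Open Scope ring_scope.

Record vocab := Vocab {
  nrel : nat; rar : 'I_nrel -> nat;
  nfun : nat; far : 'I_nfun -> nat }.

Inductive op := OpAdd | OpMul | OpSum.
Inductive cmp := CEq | CLt | CLe.

Definition op_eqb (a b : op) : bool :=
  match a, b with OpAdd, OpAdd | OpMul, OpMul | OpSum, OpSum => true | _, _ => false end.
Definition cmp_eqb (a b : cmp) : bool :=
  match a, b with CEq, CEq | CLt, CLt | CLe, CLe => true | _, _ => false end.

Section Syntax.
Variable V : vocab.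

(** Numerical terms.  First-order variables are natural numbers; function
    variables are named by a pair (name, arity). *)
Inductive nterm :=
| NConst (c : R)
| NFSym (g : 'I_(nfun V)) (xs : (far g).-tuple nat)
| NFVar (f k : nat) (xs : k.-tuple nat)
| NAdd (i j : nterm)
| NMul (i j : nterm)
| NSum (ys : seq nat) (i : nterm).

(** Formulae of ESO (negation normal form, as in the paper). *)
Inductive form :=
| FEq (x y : nat)
| FNeq (x y : nat)
| FCmp (e : cmp) (i j : nterm)
| FNCmp (e : cmp) (i j : nterm)
| FRel (r : 'I_(nrel V)) (xs : (rar r).-tuple nat)
| FNRel (r : 'I_(nrel V)) (xs : (rar r).-tuple nat)
| FAnd (p q : form)
| FOr (p q : form)
| FEx (x : nat) (p : form)
| FAll (x : nat) (p : form)
| FExF (f k : nat) (p : form).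

Fixpoint free_t (v : nat) (i : nterm) : bool :=
  match i with
  | NConst _ => false
  | NFSym _ xs => v \in tval xs
  | NFVar _ _ xs => v \in tval xs
  | NAdd i j | NMul i j => free_t v i || free_t v j
  | NSum ys i => (v \notin ys) && free_t v i
  end.

Fixpoint free (v : nat) (p : form) : bool :=
  match p with
  | FEq x y | FNeq x y => (v == x) || (v == y)
  | FCmp _ i j | FNCmp _ i j => free_t v i || free_t v j
  | FRel _ xs | FNRel _ xs => v \in tval xs
  | FAnd p q | FOr p q => free v p || free v q
  | FEx x p | FAll x p => (v != x) && free v p
  | FExF _ _ p => free v p
  end.

(** No free function variables ([bnd] = function variables bound so far). *)
Fixpoint fclosed_t (bnd : seq (nat * nat)) (i : nterm) : bool :=
  match i with
  | NConst _ | NFSym _ _ => true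
  | NFVar f k _ => (f, k) \in bnd
  | NAdd i j | NMul i j => fclosed_t bnd i && fclosed_t bnd j
  | NSum _ i => fclosed_t bnd i
  end.

Fixpoint fclosed (bnd : seq (nat * nat)) (p : form) : bool :=
  match p with
  | FEq _ _ | FNeq _ _ | FRel _ _ | FNRel _ _ => true
  | FCmp _ i j | FNCmp _ i j => fclosed_t bnd i && fclosed_t bnd j
  | FAnd p q | FOr p q => fclosed bnd p && fclosed bnd q
  | FEx _ p | FAll _ p => fclosed bnd p
  | FExF f k p => fclosed ((f, k) :: bnd) p
  end.

(** Fragment ESO[O,E,C]: terms use only operations in O and constants in C,
    atoms use only comparison symbols in E. *)
Fixpoint term_ok (O : op -> bool) (C : R -> bool) (i : nterm) : bool :=
  match i with
  | NConst c => C c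
  | NFSym _ _ | NFVar _ _ _ => true
  | NAdd i j => O OpAdd && term_ok O C i && term_ok O C j
  | NMul i j => O OpMul && term_ok O C i && term_ok O C j
  | NSum _ i => O OpSum && term_ok O C i
  end.

Fixpoint form_ok (O : op -> bool) (E : cmp -> bool) (C : R -> bool) (p : form) : bool :=
  match p with
  | FEq _ _ | FNeq _ _ | FRel _ _ | FNRel _ _ => true
  | FCmp e i j | FNCmp e i j => E e && term_ok O C i && term_ok O C j
  | FAnd p q | FOr p q => form_ok O E C p && form_ok O E C q
  | FEx _ p | FAll _ p | FExF _ _ p => form_ok O E C p
  end.

Fixpoint loose (p : form) : bool :=
  match p with
  | FNCmp _ _ _ => false
  | FAnd p q | FOr p q => loose p && loose q
  | FEx _ p | FAll _ p | FExF _ _ p => loose p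
  | _ => true
  end.

Fixpoint has_num (p : form) : bool :=
  match p with
  | FCmp _ _ _ | FNCmp _ _ _ => true
  | FAnd p q | FOr p q => has_num p || has_num q
  | FEx _ p | FAll _ p | FExF _ _ p => has_num p
  | _ => false
  end.

Fixpoint almost_conj (p : form) : bool :=
  match p with
  | FOr p q => (~~ has_num p || ~~ has_num q) && almost_conj p && almost_conj q
  | FAnd p q => almost_conj p && almost_conj q
  | FEx _ p | FAll _ p | FExF _ _ p => almost_conj p
  | _ => true
  end.

(** Prenex form with quantifier prefix in (function-exists)^* (forall)^*. *)
Fixpoint qfree (p : form) : bool :=
  match p with
  | FAnd p q | FOr p q => qfree p && qfree q
  | FEx _ _ | FAll _ _ | FExF _ _ _ => false
  | _ => true
  end.

Fixpoint prefix_A (p : form) : bool :=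
  match p with
  | FAll _ q => prefix_A q
  | _ => qfree p
  end.

Fixpoint prefix_EfA (p : form) : bool :=
  match p with
  | FExF _ _ q => prefix_EfA q
  | _ => prefix_A p
  end.

(** An R-structure over a finite universe A: relations and real-valued
    functions (inputs are sequences; only those of the right arity are used). *)
Record structure (A : finType) := Structure {
  rel_i : forall r : 'I_(nrel V), seq A -> bool;
  fun_i : forall g : 'I_(nfun V), seq A -> R }.

Section Sem.
Variables (A : finType) (I : structure A).

Definition upd (s : nat -> A) (x : nat) (a : A) : nat -> A :=
  fun y => if y == x then a else s y.

Fixpoint upds (s : nat -> A) (ys : seq nat) (t : seq A) : nat -> A :=
  match ys, t with
  | y :: ys', a :: t' => upd (upds s ys' t') y a
  | _, _ => s
  end.

Definition fenv := nat -> nat -> seq A -> R.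

Definition updF (F : fenv) (f k : nat) (g : seq A -> R) : fenv :=
  fun f' k' => if (f' == f) && (k' == k) then g else F f' k'.

Fixpoint eval (F : fenv) (s : nat -> A) (i : nterm) : R :=
  match i with
  | NConst c => c
  | NFSym g xs => fun_i I g (map s (tval xs))
  | NFVar f k xs => F f k (map s (tval xs))
  | NAdd i j => eval F s i + eval F s j
  | NMul i j => eval F s i * eval F s j
  | NSum ys i => \sum_(t : (size ys).-tuple A) eval F (upds s ys (tval t)) i
  end.

Definition cmpR (e : cmp) (a b : R) : Prop :=
  match e with CEq => a = b | CLt => a < b | CLe => a <= b end.

Definition is_distr (k : nat) (g : seq A -> R) : Prop :=
  (forall t : k.-tuple A, 0 <= g (tval t)) /\
  \sum_(t : k.-tuple A) g (tval t) = 1.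

(** Satisfaction, with function quantifiers ranging over distributions
    (the d[0,1] semantics). *)
Fixpoint sat (F : fenv) (s : nat -> A) (p : form) : Prop :=
  match p with
  | FEq x y => s x = s y
  | FNeq x y => s x <> s y
  | FCmp e i j => cmpR e (eval F s i) (eval F s j)
  | FNCmp e i j => ~ cmpR e (eval F s i) (eval F s j)
  | FRel r xs => rel_i I r (map s (tval xs))
  | FNRel r xs => ~~ rel_i I r (map s (tval xs))
  | FAnd p q => sat F s p /\ sat F s q
  | FOr p q => sat F s p \/ sat F s q
  | FEx x p => exists a : A, sat F (upd s x a) p
  | FAll x p => forall a : A, sat F (upd s x a) p
  | FExF f k p => exists g : seq A -> R, is_distr k g /\ sat (updF F f k g) s p
  end.

End Sem.

Definition sat0 (A : finType) (I : structure A) (s : nat -> A) (p : form) : Prop :=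
  sat I (fun _ _ _ => 0) s p.

Definition struc_nonempty (p : form) : Prop :=
  exists (A : finType) (I : structure A) (s : nat -> A), (1 < #|A|)%N /\ sat0 I s p.

(** Struc_R(p) = Struc_R(q), where Struc_R(p) is the class of pairs
    (A, s) with A an R-structure (|A| >= 2) and s an assignment of exactly
    the free first-order variables of p, such that A |=_s p. *)
Definition struc_eqR (p q : form) : Prop :=
  ((forall v, free v p = free v q) /\
   (forall (A : finType) (I : structure A) (s : nat -> A),
       (1 < #|A|)%N -> (sat0 I s p <-> sat0 I s q)))
  \/ (~ struc_nonempty p /\ ~ struc_nonempty q).

Definition leR (L1 L2 : form -> bool) : Prop :=
  forall p, L1 p -> exists q, L2 q /\ struc_eqR p q.
Definition equivR (L1 L2 : form -> bool) : Prop := leR L1 L2 /\ leR L2 L1.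

Definition L_ESO_d (O : op -> bool) (E : cmp -> bool) (C : R -> bool) (p : form) : bool :=
  [&& fclosed [::] p, form_ok O E C p & loose p].

End Syntax.

Definition O_SUM : op -> bool := fun o => op_eqb o OpSum.
Definition E_eq : cmp -> bool := fun e => cmp_eqb e CEq.
Definition C_none : R -> bool := fun _ => false.
Definition C_01 : R -> bool := fun c => (c == 0) || (c == 1).

(* Main.v *)
Require Import Defs.
From Stdlib Require Import Reals.
From mathcomp Require Import all_boot all_order all_algebra.
From mathcomp Require Import Rstruct.
From mathcomp Require Import zify.
Set Implicit Arguments. Unset Strict Implicit. Unset Printing Implicit Defensive.
Import Order.TTheory GRing.Theory Num.Theory.

Section Trans.
Variable V : vocab.
Local Notation nterm := (nterm V).
Local Notation fm := (Defs.form V).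

Definition mxl (l : seq nat) := foldr maxn 0%N l.

Fixpoint mvt (i : nterm) : nat := match i with
 | NConst _ => 0%N | NFSym _ xs => mxl xs | NFVar _ _ xs => mxl xs
 | NAdd i j | NMul i j => maxn (mvt i) (mvt j)
 | NSum ys i => maxn (mxl ys) (mvt i) end.

Fixpoint mvf (p : fm) : nat := match p with
 | FEq x y | FNeq x y => maxn x y
 | FCmp _ i j | FNCmp _ i j => maxn (mvt i) (mvt j)
 | FRel _ xs | FNRel _ xs => mxl xs
 | FAnd p q | FOr p q => maxn (mvf p) (mvf q)
 | FEx x p | FAll x p => maxn x (mvf p)
 | FExF _ _ p => mvf p end.

Fixpoint mft (i : nterm) : nat := match i with
 | NFVar f _ _ => f
 | NAdd i j | NMul i j => maxn (mft i) (mft j)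
 | NSum _ i => mft i
 | _ => 0%N end.

Fixpoint mff (p : fm) : nat := match p with
 | FCmp _ i j | FNCmp _ i j => maxn (mft i) (mft j)
 | FAnd p q | FOr p q => maxn (mff p) (mff q)
 | FEx _ p | FAll _ p => mff p
 | FExF f _ p => maxn f (mff p)
 | _ => 0%N end.

Section Sub.
Variables (z o : nterm).
Fixpoint st (i : nterm) : nterm := match i with
 | NConst c => if c == 1%R then o else z
 | NAdd i j => NAdd (st i) (st j)
 | NMul i j => NMul (st i) (st j)
 | NSum ys i => NSum ys (st i)
 | _ => i end.
Fixpoint sf (p : fm) : fm := match p with
 | FCmp e i j => FCmp e (st i) (st j)
 | FNCmp e i j => FNCmp e (st i) (st j)
 | FAnd p q => FAnd (sf p) (sf q)
 | FOr p q => FOr (sf p) (sf q)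
 | FEx x p => FEx x (sf p)
 | FAll x p => FAll x (sf p)
 | FExF f k p => FExF f k (sf p)
 | _ => p end.
End Sub.

Definition zt (x y M : nat) : nterm := NFVar V M [tuple x; y].
Definition ot (M : nat) : nterm := NFVar V M (@Tuple 0 nat [::] erefl).
Definition Cst (x w M : nat) : fm :=
  FCmp CEq (NSum [:: w] (NFVar V M [tuple x; w])) (NFVar V M [tuple x; x]).
Definition wrap (x y w M : nat) (p : fm) : fm :=
  FAll x (FAll y (FAnd (Cst x w M) (FOr (FEq V x y) (sf (zt x y M) (ot M) p)))).
Fixpoint G (x y w M : nat) (p : fm) : fm := match p with
 | FExF f k q => FExF f k (G x y w M q)
 | FAll v q => FAll v (G x y w M q)
 | _ => wrap x y w M p end.
Definition T (p : fm) : fm :=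
  let N := (mvf p).+1 in let M := (mff p).+1 in
  FExF M 0 (FExF M 2 (G N N.+1 N.+2 M p)).

Lemma mxl_le v l : v \in l -> (v <= mxl l)%N.
Proof. elim: l => [|a l IH] //=; rewrite in_cons leq_max => /orP[/eqP->|/IH->];
  by rewrite ?leqnn ?orbT. Qed.

Lemma free_t_le v (i : nterm) : free_t v i -> (v <= mvt i)%N.
Proof.
elim: i => //= [g xs|f k xs|i IHi j IHj|i IHi j IHj|ys i IH]; rewrite ?leq_max;
 try exact: mxl_le.
- by case/orP=> [/IHi->|/IHj->]; rewrite ?orbT.
- by case/orP=> [/IHi->|/IHj->]; rewrite ?orbT.
- by case/andP=> _ /IH ->; rewrite orbT.
Qed.

Lemma free_le v p : Defs.free v p -> (v <= mvf p)%N.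
Proof.
elim: p => /= [x y|x y|e i j|e i j|r xs|r xs|p IHp q IHq|p IHp q IHq|x p IH|x p IH|f k p IH];
 rewrite ?leq_max; try exact: mxl_le.
- by case/orP=> /eqP->; rewrite leqnn ?orbT.
- by case/orP=> /eqP->; rewrite leqnn ?orbT.
- by case/orP=> [/free_t_le->|/free_t_le->]; rewrite ?orbT.
- by case/orP=> [/free_t_le->|/free_t_le->]; rewrite ?orbT.
- by case/orP=> [/IHp->|/IHq->]; rewrite ?orbT.
- by case/orP=> [/IHp->|/IHq->]; rewrite ?orbT.
- by case/andP=> _ /IH ->; rewrite orbT.
- by case/andP=> _ /IH ->; rewrite orbT.
- exact: IH.
Qed.

Section Fresh.
Variables (x y M : nat).
Local Notation stt := (st (zt x y M) (ot M)).
Local Notation sff := (sf (zt x y M) (ot M)).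

Lemma free_st v (i : nterm) : v != x -> v != y -> free_t v (stt i) = free_t v i.
Proof.
move=> vx vy; elim: i => //= [c|i IHi j IHj|i IHi j IHj|ys i IH].
- by case: ifP => _ //=; rewrite !inE (negbTE vx) (negbTE vy).
- by rewrite IHi IHj.
- by rewrite IHi IHj.
- by rewrite IH.
Qed.

Lemma free_sf v p : v != x -> v != y -> Defs.free v (sff p) = Defs.free v p.
Proof.
move=> vx vy; elim: p => /= [x0 y0|x0 y0|e i j|e i j|r0 xs0|r0 xs0|p IHp q IHq|p IHp q IHq|z p IH|z p IH|f k p IH]; try (intros; done);
 by rewrite ?free_st ?IHp ?IHq ?IH.
Qed.

Lemma term_ok_st O C C' (i : nterm) : term_ok O C i -> term_ok O C' (stt i).
Proof.
elim: i => //= [c|i IHi j IHj|i IHi j IHj|ys i IH].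
- by case: ifP.
- by case/andP=> /andP[-> /IHi ->] /IHj.
- by case/andP=> /andP[-> /IHi ->] /IHj.
- by case/andP=> -> /IH.
Qed.

Lemma form_ok_sf O E C C' p : form_ok O E C p -> form_ok O E C' (sff p).
Proof.
elim: p => /= [x0 y0|x0 y0|e i j|e i j|r0 xs0|r0 xs0|p IHp q IHq|p IHp q IHq|z p IH|z p IH|f k p IH]; try (intros; done);
 try (by case/andP=> /andP[-> h1] h2; rewrite (term_ok_st C' h1) (term_ok_st C' h2));
 try (by case/andP=> /IHp -> /IHq); exact: IH.
Qed.

Lemma loose_sf p : loose (sff p) = loose p.
Proof. by elim: p => /= [x0 y0|x0 y0|e i j|e i j|r0 xs0|r0 xs0|p IHp q IHq|p IHp q IHq|z p IH|z p IH|f k p IH]; rewrite ?IHp ?IHq ?IH. Qed.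
Lemma has_num_sf p : has_num (sff p) = has_num p.
Proof. by elim: p => /= [x0 y0|x0 y0|e i j|e i j|r0 xs0|r0 xs0|p IHp q IHq|p IHp q IHq|z p IH|z p IH|f k p IH]; rewrite ?IHp ?IHq ?IH. Qed.
Lemma ac_sf p : almost_conj (sff p) = almost_conj p.
Proof. by elim: p => /= [x0 y0|x0 y0|e i j|e i j|r0 xs0|r0 xs0|p IHp q IHq|p IHp q IHq|z p IH|z p IH|f k p IH]; rewrite ?IHp ?IHq ?IH ?has_num_sf. Qed.
Lemma qfree_sf p : qfree (sff p) = qfree p.
Proof. by elim: p => /= [x0 y0|x0 y0|e i j|e i j|r0 xs0|r0 xs0|p IHp q IHq|p IHp q IHq|z p IH|z p IH|f k p IH]; rewrite ?IHp ?IHq. Qed.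

Lemma fclosed_t_mono (b b' : seq (nat*nat)) (i : nterm) : {subset b <= b'} -> fclosed_t b i -> fclosed_t b' i.
Proof.
move=> sub; elim: i => /= [c|g xs|f k xs|i IHi j IHj|i IHi j IHj|ys i IH] //; first exact: sub.
- by case/andP=> /IHi -> /IHj.
- by case/andP=> /IHi -> /IHj.
Qed.

Lemma fclosed_mono (p : fm) : forall b b' : seq (nat * nat), {subset b <= b'} -> Defs.fclosed b p -> Defs.fclosed b' p.
Proof.
elim: p => /= [x0 y0|x0 y0|e i j|e i j|r0 xs0|r0 xs0|p IHp q IHq|p IHp q IHq|z p IH|z p IH|f k p IH] b b' sub; try (intros; done);
 try (by case/andP=> /(fclosed_t_mono sub) -> /(fclosed_t_mono sub));
 try (by case/andP=> /(IHp _ _ sub) -> /(IHq _ _ sub)); try exact: IH.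
apply: IH => u; rewrite !inE => /orP[->//|/sub ->]; by rewrite orbT.
Qed.

Lemma fclosed_st (b : seq (nat*nat)) (i : nterm) : (M, 0%N) \in b -> (M, 2%N) \in b -> fclosed_t b i -> fclosed_t b (stt i).
Proof.
move=> h0 h2; elim: i => /= [c|g xs|f k xs|i IHi j IHj|i IHi j IHj|ys i IH] //; first by case: ifP.
- by case/andP=> /IHi -> /IHj.
- by case/andP=> /IHi -> /IHj.
Qed.

Lemma fclosed_sf (p : fm) : forall b : seq (nat * nat), (M, 0%N) \in b -> (M, 2%N) \in b -> Defs.fclosed b p -> Defs.fclosed b (sff p).
Proof.
elim: p => /= [x0 y0|x0 y0|e i j|e i j|r0 xs0|r0 xs0|p IHp q IHq|p IHp q IHq|z p IH|z p IH|f k p IH] b h0 h2; try (intros; done);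
 try (by case/andP=> /(fclosed_st h0 h2) -> /(fclosed_st h0 h2));
 try (by case/andP=> /(IHp _ h0 h2) -> /(IHq _ h0 h2)); try exact: IH.
by apply: IH; rewrite inE ?h0 ?h2 orbT.
Qed.
End Fresh.

Section GLemmas.
Variables (x y w M : nat).
Hypotheses (hxy : (x < y)%N) (hyw : (y < w)%N).

Lemma free_wrap p v : (mvf p < x)%N ->
  Defs.free v (wrap x y w M p) = Defs.free v p.
Proof.
move=> hx; have nf u : (x <= u)%N -> Defs.free u p = false.
  by move=> hu; apply/negP => /free_le; lia.
case: (eqVneq v x) => [->|vx]; first by rewrite /= eqxx /= nf.
case: (eqVneq v y) => [->|vy]; first by rewrite /= eqxx andbF /= nf //; lia.
rewrite /= free_sf // !inE (negbTE vx) (negbTE vy) /=.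
by case: (v == w).
Qed.

Lemma free_G p v : (mvf p < x)%N -> Defs.free v (G x y w M p) = Defs.free v p.
Proof.
elim: p => [x0 y0|x0 y0|e i j|e i j|r0 xs0|r0 xs0|p1 _ p2 _|p1 _ p2 _|z q _|z q IH|f k q IH] hx;
 try exact: free_wrap.
- by rewrite /= IH //; move: hx => /=; lia.
- by rewrite /= IH.
Qed.

Lemma fclosed_G p : forall b : seq (nat * nat), (M, 0%N) \in b -> (M, 2%N) \in b ->
  Defs.fclosed b p -> Defs.fclosed b (G x y w M p).
Proof.
have hw b q : (M, 0%N) \in b -> (M, 2%N) \in b ->
  Defs.fclosed b q -> Defs.fclosed b (wrap x y w M q).
  by move=> h0 h2 hq; rewrite /= h2 /=; exact: fclosed_sf.
elim: p => [x0 y0|x0 y0|e i j|e i j|r0 xs0|r0 xs0|p1 _ p2 _|p1 _ p2 _|z q _|z q IH|f k q IH] b h0 h2;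
 try exact: hw.
- exact: IH.
- by apply: IH; rewrite inE ?h0 ?h2 orbT.
Qed.

Lemma form_ok_G p : form_ok O_SUM E_eq C_01 p -> form_ok O_SUM E_eq C_none (G x y w M p).
Proof.
have hw q : form_ok O_SUM E_eq C_01 q -> form_ok O_SUM E_eq C_none (wrap x y w M q).
  by move=> hq /=; exact: form_ok_sf hq.
elim: p => [x0 y0|x0 y0|e i j|e i j|r0 xs0|r0 xs0|p1 _ p2 _|p1 _ p2 _|z q _|z q IH|f k q IH];
 try exact: hw; exact: IH.
Qed.

Lemma loose_G p : loose p -> loose (G x y w M p).
Proof.
have hw q : loose q -> loose (wrap x y w M q) by move=> hq /=; rewrite loose_sf.
elim: p => [x0 y0|x0 y0|e i j|e i j|r0 xs0|r0 xs0|p1 _ p2 _|p1 _ p2 _|z q _|z q IH|f k q IH];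
 try exact: hw; exact: IH.
Qed.

Lemma ac_G p : almost_conj p -> almost_conj (G x y w M p).
Proof.
have hw q : almost_conj q -> almost_conj (wrap x y w M q) by move=> hq /=; rewrite ac_sf.
elim: p => [x0 y0|x0 y0|e i j|e i j|r0 xs0|r0 xs0|p1 _ p2 _|p1 _ p2 _|z q _|z q IH|f k q IH];
 try exact: hw; exact: IH.
Qed.

Lemma prefA_G p : prefix_A p -> prefix_A (G x y w M p).
Proof.
have hw q : qfree q -> prefix_A (wrap x y w M q) by move=> hq /=; rewrite qfree_sf.
elim: p => [x0 y0|x0 y0|e i j|e i j|r0 xs0|r0 xs0|p1 _ p2 _|p1 _ p2 _|z q _|z q IH|f k q IH];
 try exact: hw; try done; exact: IH.
Qed.

Lemma prefEfA_G p : prefix_EfA p -> prefix_EfA (G x y w M p).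
Proof.
have hw q : qfree q -> prefix_EfA (wrap x y w M q) by move=> hq /=; rewrite qfree_sf.
elim: p => [x0 y0|x0 y0|e i j|e i j|r0 xs0|r0 xs0|p1 _ p2 _|p1 _ p2 _|z q _|z q IH|f k q IH];
 try exact: hw; try done.
all: try exact: prefA_G.
all: try exact: IH.
Qed.
End GLemmas.
End Trans.

Section Sem.
Variables (V : vocab) (A : finType) (I : structure V A).
Local Notation nterm := (nterm V).
Local Notation fm := (Defs.form V).

Definition agree (N : nat) (s1 s2 : nat -> A) := forall v, (v < N)%N -> s1 v = s2 v.

Lemma upd_agree N s1 s2 z a : agree N s1 s2 -> agree N (upd s1 z a) (upd s2 z a).
Proof. by move=> h v hv; rewrite /upd; case: ifP => // _; exact: h. Qed.

Lemma upds_agree N s1 s2 ys t : agree N s1 s2 -> agree N (upds s1 ys t) (upds s2 ys t).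
Proof.
elim: ys t => [|z ys IH] [|a t] //= h; exact: upd_agree (IH _ h).
Qed.

Lemma upds_notin (s : nat -> A) ys t v : v \notin ys -> upds s ys t v = s v.
Proof.
elim: ys t => [|z ys IH] [|a t] //=; rewrite inE negb_or => /andP[vz vys].
by rewrite /upd (negbTE vz) IH.
Qed.

Lemma eval_agree F (i : nterm) : forall N s1 s2, (mvt i < N)%N -> agree N s1 s2 ->
  eval I F s1 i = eval I F s2 i.
Proof.
elim: i => /= [c|g xs|f k xs|i IHi j IHj|i IHi j IHj|ys i IH] N s1 s2 hN h //.
- congr (fun_i I g _); apply/eq_in_map => v hv; apply: h; have := mxl_le hv; lia.
- congr (F f k _); apply/eq_in_map => v hv; apply: h; have := mxl_le hv; lia.
- by rewrite (IHi N s1 s2) ?(IHj N s1 s2) //; lia.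
- by rewrite (IHi N s1 s2) ?(IHj N s1 s2) //; lia.
- apply: eq_bigr => t _; apply: (IH N); first lia; exact: upds_agree.
Qed.

Lemma sat_agree (p : fm) : forall F N s1 s2, (mvf p < N)%N -> agree N s1 s2 ->
  sat I F s1 p <-> sat I F s2 p.
Proof.
elim: p => /= [x y|x y|e i j|e i j|r xs|r xs|p IHp q IHq|p IHp q IHq|z p IH|z p IH|f k p IH]
  F N s1 s2 hN h.
- by rewrite !h //; lia.
- by rewrite !h //; lia.
- by rewrite (eval_agree F (N:=N) (s1:=s1) (s2:=s2) (i:=i)) ?(eval_agree F (N:=N) (s1:=s1) (s2:=s2) (i:=j)) //; lia.
- by rewrite (eval_agree F (N:=N) (s1:=s1) (s2:=s2) (i:=i)) ?(eval_agree F (N:=N) (s1:=s1) (s2:=s2) (i:=j)) //; lia.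
- suff -> : map s1 xs = map s2 xs by [].
  by apply/eq_in_map => v hv; apply: h; have := mxl_le hv; lia.
- suff -> : map s1 xs = map s2 xs by [].
  by apply/eq_in_map => v hv; apply: h; have := mxl_le hv; lia.
- rewrite (IHp F N s1 s2) ?(IHq F N s1 s2) //; lia.
- rewrite (IHp F N s1 s2) ?(IHq F N s1 s2) //; lia.
- have E a : sat I F (upd s1 z a) p <-> sat I F (upd s2 z a) p.
    by apply: (IH F N); [lia|exact: upd_agree].
  by split=> [[a /E H]|[a /E H]]; exists a.
- have E a : sat I F (upd s1 z a) p <-> sat I F (upd s2 z a) p.
    by apply: (IH F N); [lia|exact: upd_agree].
  by split=> H a; apply/E.
- have E g : sat I (updF F f k g) s1 p <-> sat I (updF F f k g) s2 p.
    by apply: (IH _ N).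
  by split=> [[g [hg /E H]]|[g [hg /E H]]]; exists g.
Qed.

Definition fagree (M : nat) (F1 F2 : fenv A) := forall f k l, (f < M)%N -> F1 f k l = F2 f k l.

Lemma eval_fagree (i : nterm) : forall M F1 F2 s, (mft i < M)%N -> fagree M F1 F2 ->
  eval I F1 s i = eval I F2 s i.
Proof.
elim: i => /= [c|g xs|f k xs|i IHi j IHj|i IHi j IHj|ys i IH] M F1 F2 s hM h //.
- exact: h.
- by rewrite (IHi M F1 F2) ?(IHj M F1 F2) //; lia.
- by rewrite (IHi M F1 F2) ?(IHj M F1 F2) //; lia.
- by apply: eq_bigr => t _; apply: (IH M).
Qed.

Lemma updF_fagree M F1 F2 f k g : fagree M F1 F2 -> fagree M (updF F1 f k g) (updF F2 f k g).
Proof. by move=> h f' k' l hf; rewrite /updF; case: ifP => // _; exact: h. Qed.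

Lemma sat_fagree (p : fm) : forall M F1 F2 s, (mff p < M)%N -> fagree M F1 F2 ->
  sat I F1 s p <-> sat I F2 s p.
Proof.
elim: p => /= [x y|x y|e i j|e i j|r xs|r xs|p IHp q IHq|p IHp q IHq|z p IH|z p IH|f k p IH]
  M F1 F2 s hM h; try done.
- by rewrite (eval_fagree (i:=i) (M:=M) (F1:=F1) (F2:=F2) s) ?(eval_fagree (i:=j) (M:=M) (F1:=F1) (F2:=F2) s) //; lia.
- by rewrite (eval_fagree (i:=i) (M:=M) (F1:=F1) (F2:=F2) s) ?(eval_fagree (i:=j) (M:=M) (F1:=F1) (F2:=F2) s) //; lia.
- rewrite (IHp M F1 F2) ?(IHq M F1 F2) //; lia.
- rewrite (IHp M F1 F2) ?(IHq M F1 F2) //; lia.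
- have E a : sat I F1 (upd s z a) p <-> sat I F2 (upd s z a) p by apply: (IH M).
  by split=> [[a /E H]|[a /E H]]; exists a.
- have E a : sat I F1 (upd s z a) p <-> sat I F2 (upd s z a) p by apply: (IH M).
  by split=> H a; apply/E.
- have E g : sat I (updF F1 f k g) s p <-> sat I (updF F2 f k g) s p.
    by apply: (IH M); [lia|exact: updF_fagree].
  by split=> [[g [hg /E H]]|[g [hg /E H]]]; exists g.
Qed.
End Sem.

Lemma tuple1_val (A : Type) (t : 1.-tuple A) : tval t = [:: thead t].
Proof. by case: t => [[|a [|b l]]] //= h. Qed.

Section Sem2.
Variables (V : vocab) (A : finType) (I : structure V A).
Local Notation nterm := (nterm V).
Local Notation fm := (Defs.form V).
Variables (x y w M : nat).
Hypotheses (hxy : (x < y)%N) (hyw : (y < w)%N).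
Local Notation stt := (st (zt V x y M) (ot V M)).
Local Notation sff := (sf (zt V x y M) (ot V M)).

Lemma eval_st O F (i : nterm) : term_ok O C_01 i -> (mvt i < x)%N -> F M 0%N [::] = 1%R ->
  forall s, F M 2%N [:: s x; s y] = 0%R -> eval I F s (stt i) = eval I F s i.
Proof.
elim: i => /= [c|g xs|f k xs|i IHi j IHj|i IHi j IHj|ys i IH] hok hx h1 s h0 //.
- rewrite /C_01 in hok; case: ifP => [/eqP->|c1] //=.
  by move: hok; rewrite c1 orbF => /eqP ->.
- case/andP: hok => /andP[_ hi] hj.
  by rewrite (IHi hi _ h1 s h0) ?(IHj hj _ h1 s h0) //; lia.
- case/andP: hok => /andP[_ hi] hj.
  by rewrite (IHi hi _ h1 s h0) ?(IHj hj _ h1 s h0) //; lia.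
- case/andP: hok => _ hi.
  apply: eq_bigr => t _; apply: IH => //; first lia.
  have nx : x \notin ys by apply/negP => /mxl_le; lia.
  have ny : y \notin ys by apply/negP => /mxl_le; lia.
  by rewrite !upds_notin.
Qed.

Lemma sat_sf O E (p : fm) : form_ok O E C_01 p -> (mvf p < x)%N -> (mff p < M)%N ->
  forall F s, F M 0%N [::] = 1%R -> F M 2%N [:: s x; s y] = 0%R ->
  sat I F s (sff p) <-> sat I F s p.
Proof.
elim: p => /= [x0 y0|x0 y0|e i j|e i j|r xs|r xs|p IHp q IHq|p IHp q IHq|z p IH|z p IH|f k p IH]
  hok hx hM F s h1 h0; try done.
- case/andP: hok => /andP[_ hi] hj.
  by rewrite (eval_st hi _ h1 h0) ?(eval_st hj _ h1 h0) //; lia.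
- case/andP: hok => /andP[_ hi] hj.
  by rewrite (eval_st hi _ h1 h0) ?(eval_st hj _ h1 h0) //; lia.
- case/andP: hok => hp hq.
  by rewrite (IHp hp _ _ F s h1 h0) ?(IHq hq _ _ F s h1 h0) //; lia.
- case/andP: hok => hp hq.
  by rewrite (IHp hp _ _ F s h1 h0) ?(IHq hq _ _ F s h1 h0) //; lia.
- have Ea a : sat I F (upd s z a) (sff p) <-> sat I F (upd s z a) p.
    apply: IH => //; try lia.
    rewrite /upd; have -> : (x == z) = false by apply/negbTE; lia.
    by have -> : (y == z) = false by apply/negbTE; lia.
  by split=> [[a /Ea H]|[a /Ea H]]; exists a.
- have Ea a : sat I F (upd s z a) (sff p) <-> sat I F (upd s z a) p.
    apply: IH => //; try lia.
    rewrite /upd; have -> : (x == z) = false by apply/negbTE; lia.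
    by have -> : (y == z) = false by apply/negbTE; lia.
  by split=> H a; apply/Ea.
- have Mf : (M == f) = false by apply/negbTE; lia.
  have Eg g : sat I (updF F f k g) s (sff p) <-> sat I (updF F f k g) s p.
    by apply: IH => //; try lia; rewrite /updF Mf.
  by split=> [[g [hg /Eg H]]|[g [hg /Eg H]]]; exists g.
Qed.

Definition Dp (F : fenv A) := forall a : A,
  (\sum_(t : 1.-tuple A) F M 2%N [:: a; thead t])%R = F M 2%N [:: a; a].

Lemma zero_off F : (forall a b : A, (0 <= F M 2%N [:: a; b])%R) -> Dp F ->
  forall a b : A, a != b -> F M 2%N [:: a; b] = 0%R.
Proof.
move=> hnn hD a b ab.
have := hD a; rewrite (bigD1 [tuple a]) //= => E.
have E2 : (\sum_(t | t != [tuple a]) F M 2%N [:: a; thead t])%R = 0%R.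
  by apply: (@addrI _ (F M 2%N [:: a; a])); rewrite addr0.
apply: (psumr_eq0P (fun t _ => hnn a (thead t)) E2 (i:=[tuple b])).
apply/eqP => /(congr1 (fun t : 1.-tuple A => thead t)) /= ba.
have ba2 : b = a by exact: ba.
by rewrite ba2 eqxx in ab.
Qed.

Lemma sat_Cst F s : sat I F s (Cst V x w M) <->
  (\sum_(t : 1.-tuple A) F M 2%N [:: s x; thead t])%R = F M 2%N [:: s x; s x].
Proof.
rewrite /=.
have -> : (\sum_(t : (size [:: w]).-tuple A)
   F M 2%N [seq upds s [:: w] (tval t) i | i <- [:: x; w]])%R =
   (\sum_(t : 1.-tuple A) F M 2%N [:: s x; thead t])%R.
  apply: eq_bigr => t _; congr (F M 2%N _).
  have xw : (x == w) = false by apply/negbTE; lia.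
  case: t => [[|a [|b l]] hs] //=.
  by rewrite /upd eqxx xw.
by [].
Qed.

Lemma sat_wrap O E (p : fm) F s : (1 < #|A|)%N -> form_ok O E C_01 p -> (mvf p < x)%N ->
  (mff p < M)%N -> F M 0%N [::] = 1%R -> (forall a b : A, (0 <= F M 2%N [:: a; b])%R) ->
  sat I F s (wrap x y w M p) <-> Dp F /\ sat I F s p.
Proof.
move=> hA hok hx hM h1 hnn.
pose s2 a b := upd (upd s x a) y b.
have s2x a b : s2 a b x = a.
  have xy : (x == y) = false by apply/negbTE; lia.
  by rewrite /s2 /upd xy eqxx.
have s2y a b : s2 a b y = b by rewrite /s2 /upd eqxx.
have ag a b : agree x (s2 a b) s.
  move=> v hv; rewrite /s2 /upd; have -> : (v == y) = false by apply/negbTE; lia.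
  by have -> : (v == x) = false by apply/negbTE; lia.
have hpe a b : sat I F (s2 a b) p <-> sat I F s p.
  exact: (@sat_agree V A I p F x _ _ hx (ag a b)).
change ((forall a b, sat I F (s2 a b) (Cst V x w M) /\
   (s2 a b x = s2 a b y \/ sat I F (s2 a b) (sff p))) <-> Dp F /\ sat I F s p).
split.
- move=> H.
  have hD : Dp F by move=> a; have [/sat_Cst hc _] := H a a; rewrite s2x in hc.
  split=> //.
  have [a [b [_ _ ab]]] := card_gt1P hA.
  have [_ [|hp]] := H a b; first by rewrite s2x s2y => eab; rewrite eab eqxx in ab.
  apply/(hpe a b); apply/(sat_sf hok hx hM) => //.
  by rewrite s2x s2y; apply: zero_off.
- move=> [hD hp] a b; split; first by apply/sat_Cst; rewrite s2x; exact: hD.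
  case: (eqVneq a b) => [->|ab]; first by left; rewrite s2x s2y.
  right; apply/(sat_sf hok hx hM) => //; first by rewrite s2x s2y; apply: zero_off.
  exact/(hpe a b).
Qed.

Lemma sat_G O E (p : fm) : (1 < #|A|)%N -> form_ok O E C_01 p -> (mvf p < x)%N ->
  (mff p < M)%N -> forall F s, F M 0%N [::] = 1%R -> (forall a b : A, (0 <= F M 2%N [:: a; b])%R) ->
  sat I F s (G x y w M p) <-> Dp F /\ sat I F s p.
Proof.
move=> hA; elim: p => [x0 y0|x0 y0|e i j|e i j|r0 xs0|r0 xs0|p1 _ p2 _|p1 _ p2 _|z q _|z q IH|f k q IH]
  hok hx hM F s h1 hnn; try exact: (sat_wrap s hA hok hx hM h1 hnn).
- have Ea a : sat I F (upd s z a) (G x y w M q) <-> Dp F /\ sat I F (upd s z a) q.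
    by apply: IH => //; move: hx => /=; lia.
  split=> [H|[hD H] a]; last by apply/Ea.
  split; first by have [] := (Ea (s 0%N)).1 (H (s 0%N)).
  by move=> a; have [] := (Ea a).1 (H a).
- have Mf : (M == f) = false by apply/negbTE; move: hM => /=; lia.
  have DE g : Dp (updF F f k g) <-> Dp F by rewrite /Dp /updF Mf.
  have Eg g : sat I (updF F f k g) s (G x y w M q) <-> Dp F /\ sat I (updF F f k g) s q.
    rewrite -DE; apply: IH => //; try (move: hM => /=; lia).
    - by rewrite /updF Mf.
    - by move=> a b; rewrite /updF Mf; exact: hnn.
  split=> [[g [hg /Eg [hD H]]]|[hD [g [hg H]]]]; first by split=> //; exists g.
  by exists g; split=> //; apply/Eg.
Qed.
End Sem2.

Lemma distr0 (A : finType) (g : seq A -> R) : is_distr 0 g -> g [::] = 1%R.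
Proof.
case=> _ <-; rewrite (bigD1 [tuple]) //= big1 ?addr0 // => t ht.
by exfalso; move/eqP: ht; apply; exact: tuple0.
Qed.

Lemma distr0_one (A : finType) : is_distr 0 (fun _ : seq A => 1%R).
Proof.
split=> [t|]; first exact: ler01.
rewrite (bigD1 [tuple]) //= big1 ?addr0 // => t ht.
by exfalso; move/eqP: ht; apply; exact: tuple0.
Qed.

Definition gd0 (A : finType) (a0 : A) : seq A -> R :=
  fun l => if l == [:: a0; a0] then 1%R else 0%R.

Lemma distr2_gd0 (A : finType) (a0 : A) : is_distr 2 (gd0 a0).
Proof.
split=> [t|]; first by rewrite /gd0; case: ifP => _; [exact: ler01|exact: lexx].
rewrite (bigD1 [tuple a0; a0]) //= /gd0 eqxx big1 ?addr0 // => t ht.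
case: ifP => // /eqP h; exfalso; move/eqP: ht; apply; apply: val_inj; exact: h.
Qed.

Lemma Dp_gd0 (A : finType) (a0 : A) M : Dp M (fun f k => if (f == M) && (k == 2%N) then gd0 a0 else (fun _ => 0%R)).
Proof.
move=> a; rewrite /= eqxx /=.
rewrite (bigD1 [tuple a]) //= big1 ?addr0 // => t ht.
rewrite /gd0; case: ifP => // /eqP [ha ht0]; exfalso; move/eqP: ht; apply.
apply: val_inj; rewrite /= tuple1_val; congr [:: _]; by rewrite ht0 ha.
Qed.

Lemma struc_T V (p : Defs.form V) : L_ESO_d O_SUM E_eq C_01 p -> struc_eqR p (T p).
Proof.
case/and3P => hcl hok hl; left; split.
  by move=> v; rewrite /T /= free_G //.
move=> A I s hA; rewrite /sat0 /T /=.
set N := (mvf p).+1; set M := (mff p).+1.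
pose F0 : fenv A := fun _ _ _ => 0%R.
have key ge gd : is_distr 0 ge -> is_distr 2 gd ->
   (sat I (updF (updF F0 M 0 ge) M 2 gd) s (G N N.+1 N.+2 M p) <->
    Dp M (updF (updF F0 M 0 ge) M 2 gd) /\ sat I F0 s p).
  move=> hge hgd.
  rewrite (sat_G I (ltnSn N) (ltnSn N.+1) hA hok (ltnSn _) (ltnSn _)).
  - suff -> : sat I (updF (updF F0 M 0 ge) M 2 gd) s p <-> sat I F0 s p by [].
    apply: (sat_fagree I s (ltnSn _)) => f k l hf.
    by rewrite /updF; have -> : (f == M) = false by apply/negbTE; lia.
  - by rewrite /updF !eqxx /=; exact: distr0 hge.
  - by move=> a b; rewrite /updF !eqxx /=; case: hgd => h _; exact: (h [tuple a; b]).
split.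
- move=> hp; exists (fun _ => 1%R); split; first exact: distr0_one.
  exists (gd0 (s 0%N)); split; first exact: distr2_gd0.
  apply/key; [exact: distr0_one|exact: distr2_gd0|split=> //].
  move=> a; rewrite /updF !eqxx /=.
  have := Dp_gd0 (s 0%N) M a; by rewrite /= eqxx.
- case=> ge [hge [gd [hgd H]]].
  by have [_] := (key ge gd hge hgd).1 H.
Qed.

Lemma T_syn V (p : Defs.form V) : L_ESO_d O_SUM E_eq C_01 p ->
  [&& L_ESO_d O_SUM E_eq C_none (T p), almost_conj p ==> almost_conj (T p)
    & prefix_EfA p ==> prefix_EfA (T p)].
Proof.
case/and3P => hcl hok hl; rewrite /T /=.
apply/and3P; split.
- apply/and3P; split.
  + apply: fclosed_G; rewrite ?inE ?eqxx ?orbT //.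
    by apply: (fclosed_mono _ hcl) => u; rewrite in_nil.
  + exact: form_ok_G.
  + exact: loose_G.
- by apply/implyP; exact: ac_G.
- by apply/implyP; exact: prefEfA_G.
Qed.

Lemma form_ok_mono V O E (C C' : R -> bool) (p : Defs.form V) : (forall c, C c -> C' c) ->
  form_ok O E C p -> form_ok O E C' p.
Proof.
move=> hC.
have ht (i : nterm V) : term_ok O C i -> term_ok O C' i.
  elim: i => /= [c|g xs|f k xs|i IHi j IHj|i IHi j IHj|ys i IH] //; first exact: hC.
  - by case/andP=> /andP[-> /IHi ->] /IHj.
  - by case/andP=> /andP[-> /IHi ->] /IHj.
  - by case/andP=> -> /IH.
elim: p => /= [x0 y0|x0 y0|e i j|e i j|r0 xs0|r0 xs0|p IHp q IHq|p IHp q IHq|z p IH|z p IH|f k p IH] //;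
 try (by case/andP=> /andP[-> /ht ->] /ht);
 try (by case/andP=> /IHp -> /IHq).
Qed.

Lemma struc_refl V (p : Defs.form V) : struc_eqR p p.
Proof. by left; split. Qed.

Theorem mainTheorem7 (V : vocab) :
  equivR (L_ESO_d (V := V) O_SUM E_eq C_none) (L_ESO_d O_SUM E_eq C_01) /\
  equivR (fun p => [&& L_ESO_d (V := V) O_SUM E_eq C_none p, almost_conj p & prefix_EfA p])
         (fun p => [&& L_ESO_d (V := V) O_SUM E_eq C_01 p, almost_conj p & prefix_EfA p]).
Proof.
have n1 (p : Defs.form V) : L_ESO_d O_SUM E_eq C_none p -> L_ESO_d O_SUM E_eq C_01 p.
  case/and3P => h1 h2 h3; apply/and3P; split=> //.
  by apply: form_ok_mono h2.
split; split.
- by move=> p hp; exists p; split; [exact: n1|exact: struc_refl].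
- move=> p hp; exists (T p); split; last exact: struc_T.
  by case/and3P: (T_syn hp).
- move=> p /and3P[hp ha hpr]; exists p; split; last exact: struc_refl.
  by rewrite n1 // ha hpr.
- move=> p /and3P[hp ha hpr]; exists (T p); split; last exact: struc_T.
  case/and3P: (T_syn hp) => -> /implyP h1 /implyP h2.
  by rewrite h1 // h2.
Qed.
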